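(* Let $A$ be a countable non-empty set of players, $C$ a finite non-empty set of choices, $d:C^*\to A$, and for each $a\in A$ let $f_a:C^\omega\to[0,1]$ be upper semi-continuous (with respect to the product of discrete topologies on $C^\omega$). Then the infinite sequential game $\langle A,C,d,(f_a)_{a\in A}\rangle$ has a Nash equilibrium.
   Context: A strategy of $a$ is a function $s_a:d^{-1}(\{a\})\to C$; a profile is identified with $\sigma:C^*\to C$, inducing the play $p(\sigma)$ with $p_n=\sigma(p_{<n})$. $\sigma_{a\mapsto s_a}$ agrees with $s_a$ on $d^{-1}(\{a\})$ and with $\sigma$ elsewhere. $\sigma$ is a Nash equilibrium if there is no player $a$ and strategy $s_a$ with $f_a(p(\sigma))<f_a(p(\sigma_{a\mapsto s_a}))$. *)

(* Defs.v *)
From mathcomp Require Import all_boot.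
From Stdlib Require Import Reals.
Set Implicit Arguments. Unset Strict Implicit. Unset Printing Implicit Defensive.

(* Histories C^* are [seq C]; plays C^omega are [nat -> C].
   A profile is sigma : seq C -> C. *)

Fixpoint hist (C : Type) (sigma : seq C -> C) (n : nat) : seq C :=
  match n with
  | 0 => [::]
  | n'.+1 => rcons (hist sigma n') (sigma (hist sigma n'))
  end.

Definition play (C : Type) (sigma : seq C -> C) : nat -> C :=
  fun n => sigma (hist sigma n).

Definition strategy (A : eqType) (C : Type) (d : seq C -> A) (a : A) : Type :=
  forall h : seq C, d h = a -> C.

Definition deviate (A : eqType) (C : Type) (d : seq C -> A) (sigma : seq C -> C)
  (a : A) (s : strategy d a) : seq C -> C :=
  fun h => match @eqP A (d h) a with
           | ReflectT e => s h e
           | ReflectF _ => sigma h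
           end.

Definition nash_equilibrium (A : eqType) (C : Type) (d : seq C -> A)
  (f : A -> (nat -> C) -> R) (sigma : seq C -> C) : Prop :=
  ~ exists (a : A) (s : strategy d a),
      (f a (play sigma) < f a (play (deviate sigma s)))%R.

(* Upper semi-continuity w.r.t. the product of discrete topologies on C^omega:
   basic neighbourhoods of p are the cylinders {q | q_i = p_i for i < n}. *)
Definition usc_cantor (C : Type) (g : (nat -> C) -> R) : Prop :=
  forall (p : nat -> C) (eps : R), (0 < eps)%R ->
    exists n : nat, forall q : nat -> C,
      (forall i, (i < n)%N -> q i = p i) -> (g q < g p + eps)%R.

(* Main.v *)
Require Import Defs.
From mathcomp Require Import all_boot.
From mathcomp Require Import zify.
From Stdlib Require Import Reals ClassicalEpsilon FunctionalExtensionality Classical Lra.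
Set Implicit Arguments. Unset Strict Implicit. Unset Printing Implicit Defensive.

Definition EM := excluded_middle_informative.

Lemma ex_least (P : nat -> Prop) : (exists n, P n) -> exists n, P n /\ forall m, m < n -> ~ P m.
Proof.
move=> [n Pn]; apply: NNPP => H.
have K : forall N m, m <= N -> ~ P m.
  elim=> [|N IH] m Hm Pm.
    move: Hm; rewrite leqn0 => /eqP E; subst m; apply: H; exists 0; split=> //.
  case: (leqP m N) => [le|lt]; first exact: IH le Pm.
  apply: H; exists m; split=> // k Hk; apply: IH; rewrite -ltnS; exact: leq_trans Hk Hm.
exact: K (leqnn n) Pn.
Qed.

Definition lst (P : nat -> Prop) : nat :=
  match EM (exists n, P n) with
  | left H => proj1_sig (constructive_indefinite_description _ (ex_least H))
  | right _ => 0
  end.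

Lemma lst_spec P : (exists n, P n) -> P (lst P) /\ forall m, m < lst P -> ~ P m.
Proof.
rewrite /lst; case: (EM _) => // H _.
by case: (constructive_indefinite_description _ _).
Qed.

Lemma lst_unique P n : P n -> (forall m, m < n -> ~ P m) -> lst P = n.
Proof.
move=> Pn Hn; have [H1 H2] := lst_spec (ex_intro _ n Pn).
case: (ltngtP (lst P) n) => // lt; [by case: (Hn _ lt) | by case: (H2 _ lt)].
Qed.

Definition choose_or (T : Type) (d0 : T) (P : T -> Prop) : T :=
  match EM (exists x, P x) with
  | left H => proj1_sig (constructive_indefinite_description _ H)
  | right _ => d0
  end.

Lemma choose_or_spec T d0 (P : T -> Prop) : (exists x, P x) -> P (choose_or d0 P).
Proof. rewrite /choose_or; case: (EM _) => // H _; by case: (constructive_indefinite_description _ _). Qed.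

Lemma le_of_approx (x t : R) : (forall k, x < t + / INR k.+1)%R -> (x <= t)%R.
Proof.
move=> H; apply: Rnot_lt_le => lt.
have [n Hn] := INR_archimed (x - t) 1 ltac:(lra).
have Hn1 : (1 < INR n.+1 * (x - t))%R.
  rewrite S_INR; nra.
have pos : (0 < INR n.+1)%R by apply: lt_0_INR; apply/ltP.
have := H n; have : (/ INR n.+1 < x - t)%R.
  apply: (Rmult_lt_reg_l (INR n.+1)) => //. rewrite Rinv_r; [lra | lra].
lra.
Qed.
Section Game.
Variables (A : countType) (C : finType) (c0 : C) (d : seq C -> A)
  (f : A -> (nat -> C) -> R).
Hypothesis f_usc : forall a, usc_cantor (f a).

Definition pre (q : nat -> C) n : seq C := mkseq q n.

Lemma size_pre q n : size (pre q n) = n.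
Proof. exact: size_mkseq. Qed.
Lemma pre_S q n : pre q n.+1 = rcons (pre q n) (q n).
Proof. exact: mkseqS. Qed.
Lemma nth_pre q n i : i < n -> nth c0 (pre q n) i = q i.
Proof. exact: nth_mkseq. Qed.
Lemma take_pre q n i : i <= n -> take i (pre q n) = pre q i.
Proof.
move=> le; apply: (@eq_from_nth _ c0).
  by rewrite size_take !size_pre; move: le; rewrite leq_eqVlt => /orP [/eqP->|->]; rewrite ?ltnn.
move=> j; rewrite size_take size_pre => Hj.
have ji : j < i by move: Hj; case: (ltnP i n) => // ni Hj; apply: (leq_trans Hj ni).
rewrite nth_take // !nth_pre //; exact: leq_trans ji le.
Qed.

Lemma hist_pre (s : seq C -> C) n : hist s n = pre (play s) n.
Proof. elim: n => [|n IH] //=; by rewrite pre_S -IH. Qed.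
Lemma play_pre (s : seq C -> C) n : play s n = s (pre (play s) n).
Proof. by rewrite {1}/play hist_pre. Qed.

Lemma ext_rcons q h c : pre q (size (rcons h c)) = rcons h c -> pre q (size h) = h /\ q (size h) = c.
Proof. rewrite size_rcons pre_S => /rcons_inj [-> ->]; by []. Qed.
Lemma ext_le q h n : pre q (size h) = h -> n <= size h -> pre q n = take n h.
Proof. move=> E le; by rewrite -E take_pre. Qed.

Definition pf (h : seq C) (rho : seq C -> C) : nat -> C :=
  play (fun g => if size g < size h then nth c0 h (size g) else rho g).

Lemma pf_ext h rho : pre (pf h rho) (size h) = h.
Proof.
apply: (@eq_from_nth _ c0); first by rewrite size_pre.
move=> i; rewrite size_pre => Hi; rewrite nth_pre // /pf play_pre size_pre Hi //.
Qed.
Lemma pf_step h rho n : size h <= n -> pf h rho n = rho (pre (pf h rho) n).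
Proof. move=> le; rewrite {1}/pf play_pre size_pre ltnNge le //. Qed.

Definition OFw a (tau : seq C -> C) h (t : R) := forall q, pre q (size h) = h ->
  (forall n, size h <= n -> d (pre q n) <> a -> q n = tau (pre q n)) -> (f a q <= t)%R.
Definition OF a h t := exists tau, OFw a tau h t.
Definition AFw a (sg : seq C -> C) h (t : R) := forall q, pre q (size h) = h ->
  (forall n, size h <= n -> d (pre q n) = a -> q n = sg (pre q n)) -> (t < f a q)%R.
Definition AF a h t := exists sg, AFw a sg h t.

Lemma OF_mono a h s s' : OF a h s -> (s <= s')%R -> OF a h s'.
Proof. move=> [tau H] le; exists tau => q E K; have := H q E K; lra. Qed.

Lemma OF_AF_excl a h t : OF a h t -> AF a h t -> False.
Proof.
move=> [tau H1] [sg H2].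
pose q := pf h (fun g => if d g == a then sg g else tau g).
have E := pf_ext h (fun g => if d g == a then sg g else tau g).
have := H1 q E; have := H2 q E.
have K1 : forall n, size h <= n -> d (pre q n) <> a -> q n = tau (pre q n).
  move=> n le ne; rewrite /q pf_step //; case: eqP => //.
have K2 : forall n, size h <= n -> d (pre q n) = a -> q n = sg (pre q n).
  move=> n le ne; rewrite /q pf_step //; case: eqP => //.
move=> /(_ K2) ? /(_ K1) ?; lra.
Qed.

Lemma OF_child_a a h c s : d h = a -> OF a h s -> OF a (rcons h c) s.
Proof.
move=> dh [tau H]; exists tau => q /ext_rcons [E1 E2] K; apply: H => // n le ne.
apply: K => //; rewrite size_rcons; move: le; rewrite leq_eqVlt => /orP [/eqP Hn|//].
by case: ne; rewrite -Hn E1.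
Qed.

Lemma OF_parent_na a h c s : d h <> a -> OF a (rcons h c) s -> OF a h s.
Proof.
move=> dh [tau H]; exists (fun g => if g == h then c else tau g) => q E K.
have qh : q (size h) = c by rewrite K ?E ?eqxx.
apply: H; first by rewrite size_rcons pre_S E qh.
move=> n; rewrite size_rcons => le ne; rewrite K ?(ltnW le) //.
case: eqP => // Ex; by move: (congr1 size Ex); rewrite size_pre => Ex'; rewrite Ex' ltnn in le.
Qed.

Lemma AFw_child a sg h c t : AFw a sg h t -> (d h = a -> c = sg h) -> AFw a sg (rcons h c) t.
Proof.
move=> H hc q /ext_rcons [E1 E2] K; apply: H => // n le ea.
move: le; rewrite leq_eqVlt => /orP [/eqP Hn|lt]; last by apply: K; rewrite // size_rcons.
subst n; rewrite E2 E1; apply: hc; by rewrite -E1.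
Qed.

Lemma OF_usc a p s : (f a p < s)%R -> exists N, forall n, N <= n -> OF a (pre p n) s.
Proof.
move=> lt; have [N HN] := @f_usc a p (s - f a p)%R ltac:(lra).
exists N => n le; exists (fun _ => c0) => q E _; rewrite size_pre in E.
suff : (f a q < f a p + (s - f a p))%R by lra.
apply: HN => i iN; have iN' : i < n by exact: leq_trans iN le.
by rewrite -(nth_pre q iN') E nth_pre.
Qed.

Definition tk (t : R) k := (t + / INR k.+1)%R.
Lemma tk_gt t k : (t < tk t k)%R.
Proof. rewrite /tk; have : (0 < / INR k.+1)%R by apply: Rinv_0_lt_compat; apply: lt_0_INR; apply/ltP. lra. Qed.
Lemma tk_le t j k : j <= k -> (tk t k <= tk t j)%R.
Proof.
move=> le; rewrite /tk; apply: Rplus_le_compat_l; apply: Rinv_le_contravar.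
  by apply: lt_0_INR; apply/ltP.
by apply: le_INR; apply/leP.
Qed.

Definition Bk a t k g := forall q, pre q (size g) = g -> (f a q < tk t k)%R.

Lemma B_nest a t j k g : j <= k -> Bk a t k g -> Bk a t j g.
Proof. move=> le H q E; have := H q E; have := tk_le t le; lra. Qed.

Lemma B_ext a t k q n m : n <= m -> Bk a t k (pre q n) -> Bk a t k (pre q m).
Proof.
move=> le H q' E; apply: H; rewrite size_pre in E; rewrite size_pre.
by rewrite -(take_pre q' le) E take_pre.
Qed.

Lemma B_self a t k q n : Bk a t k (pre q n) -> (f a q < tk t k)%R.
Proof. move=> H; apply: H; by rewrite size_pre. Qed.

Lemma B_usc a t k q : (f a q < tk t k)%R -> exists N, Bk a t k (pre q N).
Proof.
move=> lt; have [N HN] := @f_usc a q (tk t k - f a q)%R ltac:(lra).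
exists N => q' E; rewrite size_pre in E.
suff : (f a q' < f a q + (tk t k - f a q))%R by lra.
apply: HN => i iN; by rewrite -(nth_pre q' iN) E nth_pre.
Qed.

Fixpoint Fk a t k n g : Prop := ~ AF a g t /\ (Bk a t k g \/
  match n with 0 => False
  | m.+1 => (d g <> a /\ exists c, Fk a t k m (rcons g c)) \/
            (d g = a /\ forall c, Fk a t k m (rcons g c)) end).

Lemma F_mono a t k n g : Fk a t k n g -> Fk a t k n.+1 g.
Proof.
elim: n g => [|n IH] g /= [nS H]; split=> //.
  by case: H => [B|[]]; left.
case: H => [B|[[dg [c Hc]]|[dg Hc]]]; [by left | right; left | right; right].
  split=> //; exists c; exact: IH.
split=> // c; exact: IH.
Qed.

Lemma F_mono_le a t k n m g : n <= m -> Fk a t k n g -> Fk a t k m g.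
Proof.
move=> le; rewrite -(subnK le); elim: (m - n) => [|j IH] //=.
move=> H; exact: F_mono (IH H).
Qed.

Lemma F_notS a t k n g : Fk a t k n g -> ~ AF a g t.
Proof. by case: n => [|n] []. Qed.

Lemma fin_bound (P : C -> nat -> Prop) : (forall c, exists n, P c n) ->
  (forall c n m, n <= m -> P c n -> P c m) -> exists N, forall c, P c N.
Proof.
move=> H mono.
have : forall s : seq C, exists N, forall c, c \in s -> P c N.
  elim=> [|x s [N HN]]; first by exists 0.
  have [n Hn] := H x; exists (maxn n N) => c; rewrite in_cons => /orP [/eqP ->|cs].
    apply: mono Hn; exact: leq_maxl.
  apply: mono (HN c cs); exact: leq_maxr.
move=> /(_ (enum C)) [N HN]; exists N => c; apply: HN; by rewrite mem_enum.
Qed.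

Definition chAF a t g := choose_or (fun _ : seq C => c0) (fun sg => AFw a sg g t).

Lemma chAF_spec a t g : AF a g t -> AFw a (chAF a t g) g t.
Proof. move=> H; exact: (choose_or_spec _ H). Qed.

Lemma L1 a t k g : ~ AF a g t -> exists n, Fk a t k n g.
Proof.
move=> nS; apply: NNPP => nF.
have Zg : forall n, ~ Fk a t k n g by move=> n Hn; apply: nF; exists n.
pose Z x := forall n, ~ Fk a t k n x.
pose zc x := choose_or c0 (fun c => Z (rcons x c)).
pose PP x i := size g <= i <= size x /\ AF a (take i x) t.
pose sg x := if EM (exists i, PP x i) then chAF a t (take (lst (PP x)) x) x else zc x.
apply: nS; exists sg => q E K.
case: (classic (exists i, size g <= i /\ AF a (pre q i) t)) => [Hex|Hno].
  have [[i0g i0S] i0min] := lst_spec Hex.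
  set i0 := lst _ in i0g i0S i0min.
  have := chAF_spec i0S; apply; first by rewrite size_pre.
  move=> n; rewrite size_pre => le ea; rewrite K //; last exact: leq_trans i0g le.
  rewrite /sg; case: (EM _) => [Hx|Hx]; last first.
    by case: Hx; exists i0; rewrite /PP size_pre i0g le take_pre.
  have -> : lst (PP (pre q n)) = i0.
    apply: lst_unique; first by rewrite /PP size_pre i0g le take_pre.
    move=> m lt [/andP [m1 m2]]; rewrite size_pre in m2; rewrite take_pre // => Sm.
    by apply: (i0min m lt); split.
  by rewrite take_pre.
have Zall : forall j, Z (pre q (size g + j)).
  elim=> [|j IH]; first by rewrite addn0 E.
  set x := pre q (size g + j) in IH *.
  have nSx : ~ AF a x t by move=> Sx; apply: Hno; exists (size g + j); split=> //; exact: leq_addr.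
  rewrite addnS pre_S -/x.
  case: (EM (d x = a)) => [ea|na].
    rewrite K ?leq_addr // -/x.
    have -> : sg x = zc x.
      rewrite /sg; case: (EM _) => // Hi; exfalso; case: Hi => i [Hi1 Si]; move/andP: Hi1 => [i1 i2].
      apply: Hno; exists i; split=> //; move: Si; rewrite /x take_pre //.
      by rewrite size_pre in i2.
    apply: (@choose_or_spec _ c0 (fun c => Z (rcons x c))).
    apply: NNPP => Hn.
    have : forall c, exists n, Fk a t k n (rcons x c).
      move=> c; apply: NNPP => Hc; apply: Hn; exists c => n Fn; apply: Hc; by exists n.
    move/fin_bound => /(_ (fun c n m le H => F_mono_le le H)) [N HN].
    apply: (IH N.+1); split=> //; right; right; by split.
  move=> n Fn; apply: (IH n.+1); split=> //; right; left; split=> //; by exists (q (size g + j)).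
have nB : forall n, size g <= n -> ~ Bk a t k (pre q n).
  move=> n le Bn; have := Zall (n - size g) 0; rewrite subnKC //; apply.
  split; [move=> Sx; apply: Hno; by exists n | by left].
have : ~ (f a q < tk t k)%R.
  move=> /B_usc [N HN]; apply: (nB (maxn N (size g))); first exact: leq_maxr.
  apply: B_ext HN; exact: leq_maxl.
have := tk_gt t k; lra.
Qed.
Lemma OF_of_notAF a h0 t : ~ AF a h0 t -> OF a h0 t.
Proof.
move=> nS0.
pose kap x := lst (fun k => ~ Bk a t k x).
pose rk x := lst (fun r => Fk a t (kap x) r x).
pose tau x := choose_or c0 (fun c => Fk a t (kap x) (rk x).-1 (rcons x c)).
exists tau => q E K.
have kspec : forall x, (exists k, ~ Bk a t k x) ->
    ~ Bk a t (kap x) x /\ forall j, j < kap x -> Bk a t j x.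
  move=> x Hx; have [H1 H2] := lst_spec Hx; split=> // j lt; exact: NNPP (H2 j lt).
have step : forall n, size h0 <= n -> ~ AF a (pre q n) t -> (exists k, ~ Bk a t k (pre q n)) ->
   0 < rk (pre q n) /\ Fk a t (kap (pre q n)) (rk (pre q n)).-1 (pre q n.+1).
  move=> n le nS Hk; set x := pre q n.
  have [nBk _] := kspec x Hk.
  have [r Fr] := L1 (kap x) nS.
  have [Fr0 _] := lst_spec (ex_intro (fun r => Fk a t (kap x) r x) r Fr).
  have Fr0' : Fk a t (kap x) (rk x) x := Fr0.
  have rpos : 0 < rk x.
    case E0 : (rk x) => [|r']; last by [].
    rewrite E0 in Fr0'; case: Fr0' => _ [B|[]]; by case: nBk.
  split=> //.
  have Fr1 : Fk a t (kap x) (rk x).-1.+1 x by rewrite prednK.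
  case: Fr1 => _ [B|[[dx [c Hc]]|[dx Hc]]]; first by case: nBk.
    rewrite pre_S K // -/x; exact: (@choose_or_spec _ c0 (fun c => Fk a t (kap x) (rk x).-1 (rcons x c)) (ex_intro _ c Hc)).
  by rewrite pre_S; apply: Hc.
have Inv : forall j, ~ AF a (pre q (size h0 + j)) t \/ forall k, Bk a t k (pre q (size h0 + j)).
  elim=> [|j [nS|allB]]; first by left; rewrite addn0 E.
    case: (classic (exists k, ~ Bk a t k (pre q (size h0 + j)))) => [Hk|Hk].
      have [_ Fn] := step _ (leq_addr _ _) nS Hk; left; rewrite addnS; exact: F_notS Fn.
    right => k; rewrite addnS; apply: (@B_ext _ _ _ _ (size h0 + j)) => //.
    apply: NNPP => nb; apply: Hk; by exists k.
  right => k; rewrite addnS; apply: (@B_ext _ _ _ _ (size h0 + j)) => //.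
have allk : forall k, exists n, Bk a t k (pre q n).
  move=> K0; apply: NNPP => HK.
  have nBK : forall n, ~ Bk a t K0 (pre q n) by move=> n Bn; apply: HK; by exists n.
  have exk : forall n, exists k, ~ Bk a t k (pre q n) by move=> n; exists K0.
  have nSn : forall n, size h0 <= n -> ~ AF a (pre q n) t.
    move=> n le; have := Inv (n - size h0); rewrite subnKC //; case=> // allB.
    by case: (nBK n).
  have kle : forall n, kap (pre q n) <= K0.
    move=> n; rewrite leqNgt; apply/negP => lt; have [_ H] := kspec _ (exk n).
    exact: nBK n (H _ lt).
  have kmono : forall n, kap (pre q n) <= kap (pre q n.+1).
    move=> n; rewrite leqNgt; apply/negP => lt; have [_ H] := kspec _ (exk n).
    have [H1 _] := kspec _ (exk n.+1); apply: H1; apply: (@B_ext _ _ _ _ n) => //; exact: H.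
  have rdec : forall n, size h0 <= n -> kap (pre q n.+1) = kap (pre q n) ->
      0 < rk (pre q n) /\ rk (pre q n.+1) < rk (pre q n).
    move=> n le ek; have [rp Fn] := step n le (nSn n le) (exk n); split=> //.
    rewrite -ek in Fn.
    have Hex : exists r, Fk a t (kap (pre q n.+1)) r (pre q n.+1) by exists (rk (pre q n)).-1.
    have [_ H2] := lst_spec Hex.
    have : rk (pre q n.+1) <= (rk (pre q n)).-1.
      rewrite leqNgt; apply/negP => lt; exact: H2 _ lt Fn.
    by case: (rk (pre q n)) rp.
  have rpos : forall n, size h0 <= n -> 0 < rk (pre q n).
    move=> n le; by have [] := step n le (nSn n le) (exk n).
  have G : forall j r n, size h0 <= n -> K0 - kap (pre q n) <= j -> rk (pre q n) <= r -> False.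
    elim=> [|j IHj] r; elim: r => [|r IHr] n le Hj Hr.
    - by move: (rpos n le); rewrite lt0n -leqn0 Hr.
    - have := kmono n; rewrite leq_eqVlt => /orP [/eqP ek|lt].
        have [_ rd] := rdec n le (esym ek); apply: (IHr n.+1 (leqW le)); first by rewrite -ek.
        by rewrite -ltnS; exact: leq_trans rd Hr.
      have := kle n.+1; lia.
    - by move: (rpos n le); rewrite lt0n -leqn0 Hr.
    - have := kmono n; rewrite leq_eqVlt => /orP [/eqP ek|lt].
        have [_ rd] := rdec n le (esym ek); apply: (IHr n.+1 (leqW le)); first by rewrite -ek.
        by rewrite -ltnS; exact: leq_trans rd Hr.
      apply: (IHj (rk (pre q n.+1)) n.+1 (leqW le)) => //.
      have := kle n.+1; lia.
  exact: (G K0 (rk (pre q (size h0))) (size h0) (leqnn _) (leq_subr _ _) (leqnn _)).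
apply: le_of_approx => k; have [n Hn] := allk k; exact: B_self Hn.
Qed.

Lemma dich a h t : OF a h t \/ AF a h t.
Proof. case: (classic (AF a h t)) => H; [by right | left; exact: OF_of_notAF]. Qed.
Definition Teq a h h' := forall s, OF a h s <-> OF a h' s.
Definition Op a h x := forall s, OF a h s <-> (x < s)%R.
Definition xo a h := choose_or 0%R (fun x => Op a h x).
Definition blk a h := lst (fun m => m <= size h /\ forall j, m <= j <= size h -> Teq a (take j h) h).
Definition mc a h := choose_or c0 (fun c => forall c' s, OF a (rcons h c) s -> OF a (rcons h c') s).
Definition psi (h : seq C) : C :=
  if EM (exists x, Op (d h) h x) then chAF (d h) (xo (d h) h) (take (blk (d h) h) h) h
  else mc (d h) h.
Definition pi := play psi.
Notation P n := (pre pi n).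

Lemma Op_unique a h x y : Op a h x -> Op a h y -> x = y.
Proof.
move=> Hx Hy; have := Hx y; have := Hy y; have := Hy x; have := Hx x.
move=> [h1 h2] [h3 h4] [h5 h6] [h7 h8].
apply: Rle_antisym; apply: Rnot_lt_le => lt.
  by have := Rlt_irrefl x; apply; apply: h1; apply: h4.
by have := Rlt_irrefl y; apply; apply: h5; apply: h8.
Qed.

Lemma Op_Teq a h h' x : Teq a h h' -> Op a h' x -> Op a h x.
Proof. move=> T O s; rewrite T; exact: O. Qed.

Lemma mc_spec a h c' s : OF a (rcons h (mc a h)) s -> OF a (rcons h c') s.
Proof.
have tot : forall c1 c2, (forall s, OF a (rcons h c1) s -> OF a (rcons h c2) s) \/
                         (forall s, OF a (rcons h c2) s -> OF a (rcons h c1) s).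
  move=> c1 c2; apply: NNPP => H.
  have [s1 [H1 H1']] : exists s1, OF a (rcons h c1) s1 /\ ~ OF a (rcons h c2) s1.
    apply: NNPP => K; apply: H; left => s0 O; apply: NNPP => N; apply: K; by exists s0.
  have [s2 [H2 H2']] : exists s2, OF a (rcons h c2) s2 /\ ~ OF a (rcons h c1) s2.
    apply: NNPP => K; apply: H; right => s0 O; apply: NNPP => N; apply: K; by exists s0.
  case: (Rle_lt_dec s1 s2) => le.
    by apply: H2'; apply: OF_mono H1 le.
  by apply: H1'; apply: OF_mono H2 (Rlt_le _ _ le).
pose le c1 c2 := forall s, OF a (rcons h c1) s -> OF a (rcons h c2) s.
have : forall l : seq C, exists c, forall c1, c1 \in l -> le c c1.
  elim=> [|x l [c Hc]]; first by exists c0.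
  case: (tot x c) => H; [exists x | exists c] => c1; rewrite in_cons => /orP [/eqP ->|cl].
  - by move=> s0.
  - move=> s0 O; apply: (Hc _ cl); exact: H.
  - exact: H.
  - exact: Hc.
move=> /(_ (enum C)) [c Hc].
apply: (@choose_or_spec _ c0 (fun c => forall c' s, OF a (rcons h c) s -> OF a (rcons h c') s)).
exists c => c'' s0; apply: Hc; by rewrite mem_enum.
Qed.

Lemma pi_step n : pi n = psi (P n).
Proof. exact: play_pre. Qed.

Lemma psi_block a n m x : d (P n) = a -> m <= n -> Op a (P n) x ->
  (forall j, m <= j <= n -> Teq a (P j) (P n)) -> (m = 0 \/ ~ Teq a (P m.-1) (P n)) ->
  psi (P n) = chAF a x (P m) (P n).
Proof.
move=> da le O T M; rewrite /psi da; case: (EM _) => [Hx|Hx]; last by case: Hx; exists x.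
have -> : xo a (P n) = x.
  apply: (Op_unique (@choose_or_spec _ 0%R (fun x => Op a (P n) x) Hx) O).
have -> : blk a (P n) = m; last by rewrite take_pre.
apply: lst_unique.
  rewrite size_pre; split=> // j /andP [j1 j2]; rewrite take_pre //; apply: T; by rewrite j1.
move=> m' lt [_ H]; case: M => [m0|nT]; first by rewrite m0 in lt.
apply: nT; have := H m.-1; rewrite size_pre take_pre; last by apply: leq_trans le; exact: leq_pred.
apply; apply/andP; split; last by apply: leq_trans le; exact: leq_pred.
by case: m lt {le T H} => // m; rewrite ltnS.
Qed.

Lemma follow a m n x : m <= n -> Op a (P n) x ->
  (forall j, m <= j <= n -> Teq a (P j) (P n)) -> (m = 0 \/ ~ Teq a (P m.-1) (P n)) ->
  forall j, m <= j <= n -> d (P j) = a -> pi j = chAF a x (P m) (P j).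
Proof.
move=> le O T M j /andP [j1 j2] da; rewrite pi_step.
have Tj := T j ltac:(by rewrite j1 j2).
apply: (psi_block da j1).
- exact: Op_Teq Tj O.
- move=> i /andP [i1 i2] s.
  have Ti := T i ltac:(by rewrite i1 (leq_trans i2 j2)).
  by rewrite (Ti s) (Tj s).
- case: M => [->|nT]; [by left | right => Tm; apply: nT => s; by rewrite (Tm s) (Tj s)].
Qed.
Lemma AF_of_notOF a h t : ~ OF a h t -> AF a h t.
Proof. by case: (dich a h t). Qed.

Lemma pre_agree q n m : m <= n -> pre q n = P n -> pre q m = P m /\ forall j, j < n -> q j = pi j.
Proof.
move=> le E; split; first by rewrite -(take_pre q le) E take_pre.
move=> j lt; by rewrite -(nth_pre q lt) E nth_pre.
Qed.

Lemma nested a n s : OF a (P n.+1) s -> OF a (P n) s.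
Proof.
rewrite pre_S; case: (EM (d (P n) = a)) => [da|na]; last exact: OF_parent_na.
case: (EM (exists x, Op a (P n) x)) => [[x O]|nO]; last first.
  have -> : pi n = mc a (P n) by rewrite pi_step /psi da; case: (EM _).
  move=> H; apply: NNPP => nOF; have [sg Hs] := AF_of_notOF nOF.
  have Hs' := AFw_child (c := sg (P n)) Hs (fun _ => erefl).
  apply: (OF_AF_excl (mc_spec (sg (P n)) H)); by exists sg.
pose PP m := m <= n /\ forall j, m <= j <= n -> Teq a (P j) (P n).
have ex : exists m, PP m.
  exists n; split=> // j /andP [j1 j2]; have -> : j = n by apply/eqP; rewrite eqn_leq j1 j2.
  by [].
have [[mle mT] mmin] := lst_spec ex.
set m := lst PP in mle mT mmin.
have M : m = 0 \/ ~ Teq a (P m.-1) (P n).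
  case E0 : m => [|m']; first by left.
  right => Tm; apply: (mmin m'); first by rewrite E0.
  split; first by apply: leq_trans mle; rewrite E0.
  move=> j /andP [j1 j2]; move: j1; rewrite leq_eqVlt => /orP [/eqP <-|lt]; first by [].
  by apply: mT; rewrite E0 lt j2.
have Om : Op a (P m) x by apply: Op_Teq O; apply: mT; rewrite leqnn mle.
have AFm : AF a (P m) x.
  apply: AF_of_notOF => H; have := proj1 (Om x) H; exact: Rlt_irrefl.
pose sg := chAF a x (P m); have Hs := chAF_spec AFm.
have Hn1 : AFw a sg (rcons (P n) (pi n)) x.
  move=> q E K; rewrite size_rcons size_pre -pre_S in E.
  have [Em _] := pre_agree (leqW mle) E.
  apply: Hs; first by rewrite size_pre.
  move=> j; rewrite size_pre => j1 ea.
  case: (ltnP n j) => [lt|j2]; first by apply: K; rewrite // size_rcons size_pre.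
  have [Ej qj] := pre_agree (leqW j2) E.
  rewrite qj ?ltnS //; rewrite Ej in ea *; apply: (follow mle O mT M) => //; by rewrite j1.
move=> H; apply/(O s); apply: Rnot_le_lt => le.
by apply: (OF_AF_excl (OF_mono H le)); exists sg.
Qed.

Lemma nested_le a n n' s : n <= n' -> OF a (P n') s -> OF a (P n) s.
Proof.
move=> le; rewrite -(subnKC le); elim: (n' - n) => [|k IH]; first by rewrite addn0.
rewrite addnS => H; apply: IH; exact: nested.
Qed.

Lemma R1 a n : OF a (P n) (f a pi).
Proof.
apply: NNPP => H0; set t := f a pi in H0.
have hi : forall s, (t < s)%R -> forall n, OF a (P n) s.
  move=> s lt k; have [N HN] := OF_usc lt.
  apply: (@nested_le _ _ (maxn k N)); first exact: leq_maxl.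
  apply: HN; exact: leq_maxr.
have ex : exists n, Op a (P n) t.
  exists n => s; split=> [Hs|Hs]; last exact: hi.
  apply: Rnot_le_lt => le; exact: H0 (OF_mono Hs le).
have [On nmin] := lst_spec ex; set ns := lst _ in On nmin.
have Oall : forall j, ns <= j -> Op a (P j) t.
  move=> j le s; split=> [Hs|Hs]; last exact: hi.
  apply/(On s); exact: nested_le le Hs.
have AFns : AF a (P ns) t.
  apply: AF_of_notOF => H; have := proj1 (On t) H; exact: Rlt_irrefl.
have Hs := chAF_spec AFns.
have : (t < f a pi)%R; last by move=> lt; exact: Rlt_irrefl lt.
apply: Hs; first by rewrite size_pre.
move=> j; rewrite size_pre => le ea.
have Oj := Oall j le.
have Teqj : forall i, ns <= i <= j -> Teq a (P i) (P j).
  move=> i /andP [i1 _] s; by rewrite (Oall i i1 s) (Oj s).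
apply: (follow le Oj Teqj) => //; last by rewrite leqnn le.
case E0 : ns => [|m]; first by left.
right => Tm; apply: (nmin m); first by rewrite E0.
exact: Op_Teq Tm Oj.
Qed.
Definition pun b h' := choose_or (fun _ : seq C => c0) (fun tau => OFw b tau h' (f b pi)).
Definition dv (g : seq C) := lst (fun i => i < size g /\ nth c0 g i <> pi i).
Definition sig (g : seq C) : C :=
  if g == P (size g) then psi g
  else pun (d (take (dv g) g)) (rcons (take (dv g) g) (nth c0 g (dv g))) g.

Lemma play_sig : play sig = pi.
Proof.
have H : forall n, pre (play sig) n = P n.
  elim=> [|n IH] //; rewrite !pre_S IH; congr rcons.
  by rewrite play_pre IH /sig size_pre eqxx -pi_step.
apply: functional_extensionality => n; by rewrite play_pre H /sig size_pre eqxx -pi_step.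
Qed.

Lemma exists_NE : exists sigma, nash_equilibrium d f sigma.
Proof.
exists sig => [[a [s Hlt]]]; rewrite play_sig in Hlt.
set q := play (deviate sig s) in Hlt.
have qstep : forall n, q n = deviate sig s (pre q n) by move=> n; exact: play_pre.
case: (classic (forall n, q n = pi n)) => [Heq|Hne].
  have E : q = pi by apply: functional_extensionality.
  move: Hlt; rewrite -/q E => Hlt; exact: Rlt_irrefl Hlt.
have ex : exists n, q n <> pi n.
  apply: NNPP => K; apply: Hne => n; apply: NNPP => K'; apply: K; by exists n.
have [qn0 n0min] := lst_spec ex; set n0 := lst _ in qn0 n0min.
have agree : forall i, i < n0 -> q i = pi i by move=> i lt; apply: NNPP; apply: n0min.
have pre_n0 : pre q n0 = P n0.
  apply: (@eq_from_nth _ c0); rewrite !size_pre // => i lt; by rewrite !nth_pre // agree.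
have dn0 : d (P n0) = a.
  apply: NNPP => na; apply: qn0; rewrite qstep /deviate.
  case: eqP => [e|_]; first by case: na; rewrite -pre_n0.
  by rewrite /sig pre_n0 size_pre eqxx -pi_step.
set hc := pre q n0.+1.
have Hhc : OF a hc (f a pi) by rewrite /hc pre_S pre_n0; apply: OF_child_a dn0 (R1 a n0).
have Htau : OFw a (pun a hc) hc (f a pi) by exact: (choose_or_spec _ Hhc).
have : (f a q <= f a pi)%R.
  apply: Htau; first by rewrite /hc size_pre.
  move=> n; rewrite /hc size_pre => le na.
  rewrite qstep /deviate; case: eqP => // _.
  rewrite /sig.
  have nth_n0 : nth c0 (pre q n) n0 = q n0 by rewrite nth_pre.
  have -> : (pre q n == P (size (pre q n))) = false.
    apply/negP => /eqP E; apply: qn0; by rewrite -nth_n0 E size_pre nth_pre.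
  have -> : dv (pre q n) = n0.
    apply: lst_unique; first by rewrite size_pre nth_n0.
    move=> m lt [_ H]; apply: H; rewrite nth_pre ?agree //; exact: ltn_trans lt le.
  by rewrite take_pre ?(ltnW le) // pre_n0 dn0 nth_n0 -pre_n0 -pre_S.
lra.
Qed.

End Game.

Theorem corollary29 (A : countType) (C : finType) (a0 : A) (c0 : C)
  (d : seq C -> A) (f : A -> (nat -> C) -> R)
  (f_range : forall (a : A) (p : nat -> C), (0 <= f a p <= 1)%R)
  (f_usc : forall a : A, usc_cantor (f a)) :
  exists sigma : seq C -> C, nash_equilibrium d f sigma.
Proof. exact: (@exists_NE A C c0 d f f_usc). Qed.
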